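(* Let $X$ be a real Banach space and $A$ a non-empty subset of $X$. Let $\mathsf P$ be any one of: remotal, uniquely remotal, strongly remotal, SUR, USUR, sup-compact. Then $B_X$ has property $\mathsf P$ on $A$ if and only if $S_X$ has property $\mathsf P$ on $A$.
   Context: $B_X,S_X$ are the closed unit ball and unit sphere. For non-empty bounded $F$, $x\in X$, $\delta\ge0$: $r(F,x)=\sup_{y\in F}\|x-y\|$, $Q_F(x,\delta)=\{y\in F:\|x-y\|\ge r(F,x)-\delta\}$, $Q_F(x)=Q_F(x,0)$. On a set $A$, $F$ is: remotal if $Q_F(x)\neq\emptyset$ for each $x\in A$; uniquely remotal if $Q_F(x)$ is a singleton for each $x\in A$; strongly remotal if for every $x\in A$ and $\epsilon>0$ there is $\delta>0$ with $Q_F(x,\delta)\subseteq Q_F(x)+\epsilon B_X$; SUR if uniquely remotal and strongly remotal; USUR if uniquely remotal and for every $\epsilon>0$ there is $\delta>0$ with $Q_F(x,\delta)\subseteq Q_F(x)+\epsilon B_X$ for all $x\in A$; sup-compact if for each $x\in A$ every sequence $(y_n)$ in $F$ with $\|x-y_n\|\to r(F,x)$ has a subsequence converging to an element of $F$. *)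

(* Defs.v *)
From HB Require Import structures.
From mathcomp Require Import all_boot all_order all_algebra.
From mathcomp Require Import all_classical all_reals all_analysis.
Set Implicit Arguments. Unset Strict Implicit. Unset Printing Implicit Defensive.
Import Order.TTheory GRing.Theory Num.Theory.
Import numFieldNormedType.Exports.
Local Open Scope classical_set_scope.
Local Open Scope ring_scope.

Section Remotal.
Context {R : realType} {X : normedModType R}.

Definition unit_ball : set X := [set x | `|x| <= 1].
Definition unit_sphere : set X := [set x | `|x| = 1].

Definition farthest_radius (F : set X) (x : X) : R :=
  sup [set `|x - y| | y in F].

Definition Qset (F : set X) (x : X) (d : R) : set X :=
  [set y | F y /\ farthest_radius F x - d <= `|x - y|].

Definition Q0 (F : set X) (x : X) : set X := Qset F x 0.

Definition add_ball (S : set X) (e : R) : set X :=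
  [set y | exists2 z, S z & `|y - z| <= e].

Definition remotal_on (F A : set X) : Prop :=
  forall x, A x -> Q0 F x !=set0.

Definition uniquely_remotal_on (F A : set X) : Prop :=
  forall x, A x -> exists y, Q0 F x = [set y].

Definition strongly_remotal_on (F A : set X) : Prop :=
  forall x, A x -> forall e : R, 0 < e ->
    exists2 d : R, 0 < d & Qset F x d `<=` add_ball (Q0 F x) e.

Definition SUR_on (F A : set X) : Prop :=
  uniquely_remotal_on F A /\ strongly_remotal_on F A.

Definition USUR_on (F A : set X) : Prop :=
  uniquely_remotal_on F A /\
  forall e : R, 0 < e -> exists2 d : R, 0 < d &
    forall x, A x -> Qset F x d `<=` add_ball (Q0 F x) e.

Definition sup_compact_on (F A : set X) : Prop :=
  forall x, A x -> forall y : nat -> X, (forall n, F (y n)) ->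
    (fun n => `|x - y n|) @ \oo --> farthest_radius F x ->
    exists phi : nat -> nat, (forall n, (phi n < phi n.+1)%N) /\
      exists2 z, F z & (y \o phi) @ \oo --> z.

End Remotal.

(* Main.v *)
Require Import Defs.
From HB Require Import structures.
From mathcomp Require Import all_boot all_order all_algebra.
From mathcomp Require Import all_classical all_reals all_analysis.
From mathcomp Require Import ring lra.
Import Order.TTheory GRing.Theory Num.Theory.
Import numFieldNormedType.Exports.
Local Open Scope classical_set_scope.
Local Open Scope ring_scope.

Section Aux.
Context {R : realType} {X : normedModType R}.

Lemma exu (hX : exists v : X, v != 0) (x : X) :
  exists u : X, `|u| = 1 /\ `|x - u| = `|x| + 1.
Proof.
case: (eqVneq x 0) => [->|x0].
- case: hX => v v0; exists (`|v|^-1 *: v).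
  have h1 : `|(`|v|^-1 *: v)| = 1.
    by rewrite normrZ normfV normr_id mulVf ?normr_eq0.
  by rewrite sub0r normrN h1 normr0 add0r.
- exists (- (`|x|^-1 *: x)); split.
    by rewrite normrN normrZ normfV normr_id mulVf ?normr_eq0.
  have xp : 0 < `|x| by rewrite normr_gt0.
  rewrite opprK -{1}(scale1r x) -scalerDl normrZ ger0_norm; last first.
    by rewrite addr_ge0 // invr_ge0 ltW.
  by rewrite mulrDl mul1r mulVf ?normr_eq0 // addrC.
Qed.

Lemma rad (F : set X) x : F `<=` unit_ball ->
  (exists u, F u /\ `|x - u| = `|x| + 1) -> farthest_radius F x = `|x| + 1.
Proof.
move=> FB [u [Fu hu]]; rewrite /farthest_radius.
have ub : ubound [set `|x - y| | y in F] (`|x| + 1).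
  move=> r [y Fy <-]; apply: (le_trans (ler_normB x y)).
  by rewrite lerD2l; apply: FB.
apply/le_anti/andP; split.
- by apply: ge_sup => //; exists `|x - u|, u.
- rewrite -hu; apply: (ub_le_sup); first by exists (`|x| + 1).
  by exists u.
Qed.

Variable hX : exists v : X, v != 0.

Lemma rB (x : X) : farthest_radius unit_ball x = `|x| + 1.
Proof.
apply: rad => //; have [u [u1 hu]] := exu hX x; exists u; split => //.
by rewrite /unit_ball /= u1.
Qed.

Lemma rS (x : X) : farthest_radius unit_sphere x = `|x| + 1.
Proof.
apply: rad.
  by move=> y; rewrite /unit_sphere /unit_ball /= => ->.
have [u [u1 hu]] := exu hX x; by exists u.
Qed.

Lemma Q0eq (x : X) : Q0 unit_ball x = Q0 unit_sphere x.
Proof.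
rewrite /Q0 /Qset rB rS subr0; apply/seteqP; split => y /= [hy h]; split => //.
- have := ler_normB x y; rewrite /unit_ball /= in hy.
  move=> h2; apply/le_anti; rewrite hy /=; lra.
- by rewrite /unit_ball /unit_sphere /= hy.
Qed.

Lemma QsubS (x : X) d : Qset unit_sphere x d `<=` Qset unit_ball x d.
Proof.
rewrite /Qset rB rS => y /= [hy h]; split => //.
by rewrite /unit_ball /= hy.
Qed.

Lemma Qmono (F : set X) x d d' : d <= d' -> Qset F x d `<=` Qset F x d'.
Proof. move=> dd y [Fy h]; split => //; apply: le_trans h; lra. Qed.

Definition nrm (u0 y : X) := if y == 0 then u0 else `|y|^-1 *: y.

Lemma nrmP u0 y : `|u0| = 1 -> `|y| <= 1 ->
  `|nrm u0 y| = 1 /\ `|y - nrm u0 y| = 1 - `|y|.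
Proof.
move=> u1 y1; rewrite /nrm; case: eqVneq => [->|y0].
  by rewrite sub0r normrN normr0 subr0.
have yp : 0 < `|y| by rewrite normr_gt0.
split; first by rewrite normrZ normfV normr_id mulVf ?normr_eq0.
rewrite -{1}(scale1r y) -scalerBl normrZ.
have -> : 1 - `|y|^-1 = - ((1 - `|y|) / `|y|).
  by field; rewrite gt_eqF.
rewrite normrN normrM normfV normr_id (ger0_norm (_ : 0 <= 1 - `|y|)); last lra.
by rewrite -mulrA mulVf ?mulr1 // gt_eqF.
Qed.

Lemma QB_to_S (u0 x : X) d y : `|u0| = 1 ->
  Qset unit_ball x d y ->
  Qset unit_sphere x (d *+ 2) (nrm u0 y) /\ `|y - nrm u0 y| <= d.
Proof.
move=> u1 [hy h]; rewrite rB in h; rewrite /unit_ball /= in hy.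
have [n1 n2] := nrmP _ _ u1 hy.
have h3 := ler_normB x y.
have h4 := ler_distD (nrm u0 y) x y; rewrite (distrC (nrm u0 y)) n2 in h4.
split; last lra.
split; first exact: n1.
rewrite rS mulr2n; lra.
Qed.


Lemma strong_SB (u0 x : X) e d' : `|u0| = 1 -> 0 < e -> 0 < d' ->
  Qset unit_sphere x d' `<=` add_ball (Q0 unit_sphere x) (e / 2) ->
  Qset unit_ball x (Num.min (d' / 2) (e / 2)) `<=` add_ball (Q0 unit_ball x) e.
Proof.
move=> u1 e0 d0 hS y hy.
set d := Num.min (d' / 2) (e / 2) in hy.
have dd : d <= d' / 2 by rewrite ge_min lexx.
have de : d <= e / 2 by rewrite ge_min lexx orbT.
have [h1 h2] := QB_to_S _ _ _ _ u1 hy.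
have : Qset unit_sphere x d' (nrm u0 y).
  by apply: (Qmono _ _ (d *+ 2)) h1; rewrite mulr2n; lra.
move=> /hS [z hz hz2]; exists z; first by rewrite Q0eq.
have := ler_distD (nrm u0 y) y z; lra.
Qed.

Lemma strong_BS (x : X) e d :
  Qset unit_ball x d `<=` add_ball (Q0 unit_ball x) e ->
  Qset unit_sphere x d `<=` add_ball (Q0 unit_sphere x) e.
Proof. by move=> h y /QsubS /h; rewrite Q0eq. Qed.

End Aux.

Lemma subseq_cvg {T : topologicalType} (u : nat -> T) (phi : nat -> nat) (l : T) :
  (forall n, (phi n < phi n.+1)%N) -> u @ \oo --> l -> (u \o phi) @ \oo --> l.
Proof.
move=> hphi hu.
have ge : forall n, (n <= phi n)%N.
  elim=> [|n IH] //; exact: leq_ltn_trans IH (hphi n).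
have : phi @ \oo --> \oo.
  apply/cvgnyPge => A; exists A => // n /= hn.
  exact: leq_trans hn (ge n).
move=> hp; exact: cvg_comp hp hu.
Qed.

Theorem proposition2p15 (R : realType) (X : completeNormedModType R)
  (A : set X) (hA : A !=set0) (hX : exists x : X, x != 0) :
  (remotal_on unit_ball A <-> remotal_on unit_sphere A) /\
  (uniquely_remotal_on unit_ball A <-> uniquely_remotal_on unit_sphere A) /\
  (strongly_remotal_on unit_ball A <-> strongly_remotal_on unit_sphere A) /\
  (SUR_on unit_ball A <-> SUR_on unit_sphere A) /\
  (USUR_on unit_ball A <-> USUR_on unit_sphere A) /\
  (sup_compact_on unit_ball A <-> sup_compact_on unit_sphere A).
Proof.
have [u0 [u01 _]] := exu hX 0.
have hR : remotal_on unit_ball A <-> remotal_on unit_sphere A.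
  by split => h x Ax; [rewrite -(Q0eq hX) | rewrite (Q0eq hX)]; exact: h.
have hU : uniquely_remotal_on unit_ball A <-> uniquely_remotal_on unit_sphere A.
  by split => h x Ax; [rewrite -(Q0eq hX) | rewrite (Q0eq hX)]; exact: h.
have hS : strongly_remotal_on unit_ball A <-> strongly_remotal_on unit_sphere A.
  split => h x Ax e e0.
  - have [d d0 hd] := h x Ax e e0; exists d => //; exact: strong_BS hd.
  - have e2 : 0 < e / 2 by lra.
    have [d d0 hd] := h x Ax (e / 2) e2.
    exists (Num.min (d / 2) (e / 2)); first by rewrite lt_min; apply/andP; split; lra.
    exact: strong_SB hX _ _ _ _ u01 e0 d0 hd.
split => //; split => //; split => //; split.
  by rewrite /SUR_on; tauto.
split.
  rewrite /USUR_on; split => -[hu h]; split; try tauto.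
  - move=> e e0; have [d d0 hd] := h e e0; exists d => // x Ax.
    exact: strong_BS (hd x Ax).
  - move=> e e0; have e2 : 0 < e / 2 by lra.
    have [d d0 hd] := h (e / 2) e2.
    exists (Num.min (d / 2) (e / 2)); first by rewrite lt_min; apply/andP; split; lra.
    move=> x Ax; exact: strong_SB hX _ _ _ _ u01 e0 d0 (hd x Ax).
split.
- move=> hB x Ax y yS hy.
  have yB n : unit_ball (y n) by rewrite /unit_ball /= (yS n).
  rewrite (rS hX) -(rB hX) in hy.
  have [phi [hphi [z Bz cz]]] := hB x Ax y yB hy.
  exists phi; split => //; exists z => //.
  have h1 : (fun n => `|(y \o phi) n|) @ \oo --> `|z| by exact: cvg_norm.
  have e : (fun n => `|(y \o phi) n|) = fun _ => 1 by apply/funext => n /=; exact: yS.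
  rewrite e in h1.
  rewrite /unit_sphere /=.
  by rewrite -(cvg_lim (@Rhausdorff R) h1); apply: (cvg_lim (@Rhausdorff R)); exact: cvg_cst.
- move=> hS' x Ax y yB hy.
  rewrite (rB hX) in hy.
  set y' := fun n => nrm u0 (y n).
  have hP n := nrmP u0 (y n) u01 (yB n).
  have hy' : (fun n => `|x - y' n|) @ \oo --> farthest_radius unit_sphere x.
    rewrite (rS hX).
    have e : (`|x| + 1) + (`|x| + 1) - (`|x| + 1) = `|x| + 1 by rewrite addrK.
    have hlow := cvgB (cvgD hy hy) (cvg_cst (`|x| + 1)).
    rewrite e in hlow.
    apply: squeeze_cvgr; [|exact: hlow|exact: cvg_cst].
    apply: nearW => n /=; have [n1 n2] := hP n.
    have h1 := ler_normB x (y n).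
    have h2 := ler_distD (y' n) x (y n).
    have h3 := ler_normB x (y' n).
    rewrite (distrC (y' n)) n2 in h2.
    rewrite n1 in h3.
    rewrite !fctE; apply/andP; split; lra.
  have [phi [hphi [z Sz cz]]] := hS' x Ax y' (fun n => (hP n).1) hy'.
  exists phi; split => //; exists z; first by rewrite /unit_ball /= Sz.
  have h0 : (fun n => y n - y' n) @ \oo --> 0.
    apply: norm_cvg0.
    have hup := cvgB (cvg_cst (`|x| + 1)) hy.
    rewrite subrr in hup.
    apply: squeeze_cvgr; [|exact: cvg_cst|exact: hup].
    apply: nearW => n /=; rewrite (hP n).2.
    have h1 := ler_normB x (y n).
    have h2 : `|y n| <= 1 := yB n.
    rewrite !fctE; apply/andP; split; lra.
  have -> : y \o phi = (y' \o phi) + ((fun n => y n - y' n) \o phi).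
    by apply/funext => n /=; rewrite addrC subrK.
  rewrite -[z]addr0; apply: cvgD => //; exact: subseq_cvg hphi h0.
Qed.
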